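(* Assume $\mathcal E$ is stable under pullback, $\mathcal N=\mathcal M\cap\operatorname{mor}\mathcal A$, and $\mathcal A$ is $\mathcal E$-reflective in $\mathcal X$ (i.e. $\rho_X\in\mathcal E$ for every $X\in\mathcal X$). Let $c$ be a closure operator on $\mathcal A$ and let $X\in\mathcal X$. If $R$ preserves products with $X$ (i.e. $\rho_{X\times Y}=\rho_X\times\rho_Y$ for every $Y\in\mathcal X$), then $X$ is $c^\rho$-compact if and only if $RX$ is $c$-compact.
   Context: Standing setting. $\mathcal X$ and $\mathcal A$ are finitely complete categories; $\mathcal X$ carries a proper factorization system $(\mathcal E,\mathcal M)$ and $\mathcal A$ a proper factorization system $(\mathcal F,\mathcal N)$ (proper: every member of $\mathcal E$, resp. $\mathcal F$, is an epimorphism and every member of $\mathcal M$, resp. $\mathcal N$, is a monomorphism). $\mathcal A$ is a full reflective subcategory of $\mathcal X$ with reflector $R:\mathcal X\to\mathcal A$ and reflection (unit) $\rho_X:X\to RX$; as in the paper's setting, $\mathcal N\subseteq\mathcal M$ and $R\mathcal E\subseteq\mathcal F$. For $X\in\mathcal X$, $\operatorname{sub}X$ is the class $\mathcal M/X$ of $\mathcal M$-morphisms with codomain $X$, preordered by $m\le n$ iff $m=nj$ for some morphism $j$; for $A\in\mathcal A$, $\operatorname{sub}_{\mathcal A}A=\mathcal N/A$ with the same preorder. For $f:X\to Y$ and $m\in\operatorname{sub}X$, the image $f(m)\in\operatorname{sub}Y$ is the $\mathcal M$-part of the $(\mathcal E,\mathcal M)$-factorization of $fm$, and for $n\in\operatorname{sub}Y$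 the preimage $f^{-1}(n)\in\operatorname{sub}X$ is the pullback of $n$ along $f$ (analogously in $\mathcal A$ using $(\mathcal F,\mathcal N)$). A closure operator $c$ on $\mathcal A$ (with respect to $\mathcal N$) is a family of maps $c_A:\operatorname{sub}_{\mathcal A}A\to\operatorname{sub}_{\mathcal A}A$ ($A\in\mathcal A$) such that $m\le c_A(m)$, $m\le n\Rightarrow c_A(m)\le c_A(n)$, and $f(c_A(m))\le c_B(f(m))$ for every morphism $f:A\to B$ of $\mathcal A$; closure operators on $\mathcal X$ (with respect to $\mathcal M$) are defined likewise. For an arbitrary morphism $g:M\to A$ of $\mathcal A$, write $g(1_M)$ for the $\mathcal N$-part of its $(\mathcal F,\mathcal N)$-factorization and put $c_A(g):=c_A(g(1_M))$. The $R$-initial lift of $c$ is the closure operator $c^\rho$ on $\mathcal X$ given by $c^\rho_X(m)=\rho_X^{-1}(c_{RX}(Rm))$ for $X\in\mathcal X$, $m\in\operatorname{sub}X$. For a closure operator $d$ on a category, an object $X$ is $d$-compact if for every object $Y$ the projection $\pi_Y:X\times Y\to Y$ is $d$-preserving, i.e. $\pi_Y(d_{X\times Y}(m))=d_Y(\pi_Y(m))$ for every subobject $m$ of $X\times Y$ (for $c$-compactness of an object of $\mathcal A$, $Y$ ranges over $\mathcal A$ and subobjects over $\operatorname{sub}_{\mathcal A}$; for $c^\rho$-compactness, over $\mathcal X$ and $\operatorname{sub}$). *)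

(* Defs.v *)
From Stdlib Require Import Classical.
Set Implicit Arguments.
Unset Strict Implicit.

Record Category := {
  Ob :> Type;
  Hom : Ob -> Ob -> Type;
  idm : forall a, Hom a a;
  comp : forall a b c, Hom b c -> Hom a b -> Hom a c;
  comp_assoc : forall a b c d (h : Hom c d) (g : Hom b c) (f : Hom a b),
      comp h (comp g f) = comp (comp h g) f;
  comp_id_l : forall a b (f : Hom a b), comp (idm b) f = f;
  comp_id_r : forall a b (f : Hom a b), comp f (idm a) = f }.
Arguments Hom {_} _ _.
Arguments idm {_} _.
Arguments comp {_ _ _ _} _ _.
Notation "g ∘ f" := (comp g f) (at level 40, left associativity).

Definition iso {C : Category} {a b : C} (f : Hom a b) : Prop :=
  exists g : Hom b a, g ∘ f = idm a /\ f ∘ g = idm b.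
Definition epi {C : Category} {a b : C} (f : Hom a b) : Prop :=
  forall c (g h : Hom b c), g ∘ f = h ∘ f -> g = h.
Definition mono {C : Category} {a b : C} (f : Hom a b) : Prop :=
  forall c (g h : Hom c a), f ∘ g = f ∘ h -> g = h.

Record Functor (C D : Category) := {
  fobj :> C -> D;
  fmap : forall a b : C, Hom a b -> Hom (fobj a) (fobj b);
  fmap_id : forall a, fmap (idm a) = idm (fobj a);
  fmap_comp : forall a b c (g : Hom b c) (f : Hom a b),
      fmap (g ∘ f) = fmap g ∘ fmap f }.
Arguments fmap {_ _} _ {_ _} _.

Definition MorClass (C : Category) := forall a b : C, Hom a b -> Prop.

Record FactSys (C : Category) := {
  fE : MorClass C;
  fM : MorClass C;
  iso_E : forall a b (f : Hom a b), iso f -> fE f;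
  iso_M : forall a b (f : Hom a b), iso f -> fM f;
  E_iso_comp : forall a b c (e : Hom a b) (i : Hom b c), fE e -> iso i -> fE (i ∘ e);
  E_comp_iso : forall a b c (i : Hom a b) (e : Hom b c), iso i -> fE e -> fE (e ∘ i);
  M_iso_comp : forall a b c (m : Hom a b) (i : Hom b c), fM m -> iso i -> fM (i ∘ m);
  M_comp_iso : forall a b c (i : Hom a b) (m : Hom b c), iso i -> fM m -> fM (m ∘ i);
  fact : forall a b (f : Hom a b),
      { z : C & { e : Hom a z & { m : Hom z b | fE e /\ fM m /\ f = m ∘ e } } };
  diag : forall a b c d (e : Hom a b) (m : Hom c d) (u : Hom a c) (v : Hom b d),
      fE e -> fM m -> m ∘ u = v ∘ e ->
      exists! w : Hom b c, w ∘ e = u /\ m ∘ w = v }.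
Arguments fE {_} _ {_ _} _.
Arguments fM {_} _ {_ _} _.

Definition proper {C : Category} (FS : FactSys C) : Prop :=
  (forall a b (f : Hom a b), fE FS f -> epi f) /\
  (forall a b (f : Hom a b), fM FS f -> mono f).

Record FinComplete (C : Category) := {
  term : C;
  to_term : forall a, Hom a term;
  to_term_uniq : forall a (f g : Hom a term), f = g;
  prod : C -> C -> C;
  pi1 : forall a b, Hom (prod a b) a;
  pi2 : forall a b, Hom (prod a b) b;
  pair : forall c a b, Hom c a -> Hom c b -> Hom c (prod a b);
  pi1_pair : forall c a b (f : Hom c a) (g : Hom c b), pi1 a b ∘ pair f g = f;
  pi2_pair : forall c a b (f : Hom c a) (g : Hom c b), pi2 a b ∘ pair f g = g;
  pair_uniq : forall c a b (u v : Hom c (prod a b)),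
      pi1 a b ∘ u = pi1 a b ∘ v -> pi2 a b ∘ u = pi2 a b ∘ v -> u = v;
  pb : forall a b c, Hom a c -> Hom b c -> C;
  pb1 : forall a b c (f : Hom a c) (g : Hom b c), Hom (pb f g) a;
  pb2 : forall a b c (f : Hom a c) (g : Hom b c), Hom (pb f g) b;
  pb_comm : forall a b c (f : Hom a c) (g : Hom b c), f ∘ pb1 f g = g ∘ pb2 f g;
  pb_univ : forall a b c (f : Hom a c) (g : Hom b c) q (q1 : Hom q a) (q2 : Hom q b),
      f ∘ q1 = g ∘ q2 -> exists u, pb1 f g ∘ u = q1 /\ pb2 f g ∘ u = q2;
  pb_uniq : forall a b c (f : Hom a c) (g : Hom b c) q (u v : Hom q (pb f g)),
      pb1 f g ∘ u = pb1 f g ∘ v -> pb2 f g ∘ u = pb2 f g ∘ v -> u = v }.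
Arguments prod {_} _ _ _.
Arguments pi1 {_} _ _ _.
Arguments pi2 {_} _ _ _.
Arguments pair {_} _ {_ _ _} _ _.
Arguments pb {_} _ {_ _ _} _ _.
Arguments pb1 {_} _ {_ _ _} _ _.
Arguments pb2 {_} _ {_ _ _} _ _.

Record Reflection (X A : Category) := {
  incl : Functor A X;
  incl_full : forall a b (f : Hom (incl a) (incl b)), exists g, fmap incl g = f;
  incl_faithful : forall a b (g h : Hom a b), fmap incl g = fmap incl h -> g = h;
  refl : Functor X A;
  unit : forall x : X, Hom x (incl (refl x));
  unit_nat : forall x y (f : Hom x y),
      fmap incl (fmap refl f) ∘ unit x = unit y ∘ f;
  unit_univ : forall (x : X) (a : A) (f : Hom x (incl a)),
      exists! g : Hom (refl x) a, fmap incl g ∘ unit x = f }.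
Arguments incl {_ _} _.
Arguments refl {_ _} _.
Arguments unit {_ _} _ _.

Section Subobjects.
Variable C : Category.

Definition sub (M : MorClass C) (x : C) : Type :=
  { s : C & { m : Hom s x | M _ _ m } }.
Definition subm {M : MorClass C} {x : C} (s : sub M x) : Hom (projT1 s) x :=
  proj1_sig (projT2 s).
Definition sub_le {M : MorClass C} {x : C} (s t : sub M x) : Prop :=
  exists j : Hom (projT1 s) (projT1 t), subm s = subm t ∘ j.
Definition sub_eqv {M : MorClass C} {x : C} (s t : sub M x) : Prop :=
  sub_le s t /\ sub_le t s.

Variable FS : FactSys C.

Definition img_of {a b : C} (g : Hom a b) : sub (@fM _ FS) b :=
  let t := fact FS g in
  existT _ (projT1 t)
    (exist _ (proj1_sig (projT2 (projT2 t)))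
             (proj1 (proj2 (proj2_sig (projT2 (projT2 t)))))).

Definition image {a b : C} (f : Hom a b) (m : sub (@fM _ FS) a) : sub (@fM _ FS) b :=
  img_of (f ∘ subm m).

Lemma pb_M (FC : FinComplete C) (s x y : C) (m : Hom s x) (f : Hom y x) :
  fM FS m -> fM FS (pb2 FC m f).
Proof.
  intros Hm.
  destruct (fact FS (pb2 FC m f)) as [z [e [n [He [Hn Hp]]]]].
  assert (Hsq : m ∘ pb1 FC m f = (f ∘ n) ∘ e).
  { rewrite pb_comm, Hp, comp_assoc. reflexivity. }
  destruct (@diag C FS _ _ _ _ _ _ _ _ He Hm Hsq) as [d [[Hd1 Hd2] _]].
  destruct (@pb_univ C FC _ _ _ m f _ d n Hd2) as [u [Hu1 Hu2]].
  assert (Hue : u ∘ e = idm _).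
  { apply (@pb_uniq C FC _ _ _ m f).
    - rewrite comp_assoc, Hu1, Hd1, comp_id_r. reflexivity.
    - rewrite comp_assoc, Hu2, <- Hp, comp_id_r. reflexivity. }
  assert (Hsq2 : n ∘ e = n ∘ e) by reflexivity.
  destruct (@diag C FS _ _ _ _ _ _ _ _ He Hn Hsq2) as [w [_ Hw]].
  assert (Heu : e ∘ u = idm _).
  { transitivity w.
    - symmetry. apply Hw. split.
      + rewrite <- comp_assoc, Hue, comp_id_r. reflexivity.
      + rewrite comp_assoc, <- Hp, Hu2. reflexivity.
    - apply Hw. split; [apply comp_id_l | apply comp_id_r]. }
  rewrite Hp. apply (@M_comp_iso C FS). { exists u. split; assumption. } exact Hn.
Qed.

Definition preimage (FC : FinComplete C) {a b : C} (f : Hom a b)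
    (n : sub (@fM _ FS) b) : sub (@fM _ FS) a :=
  existT _ (pb FC (subm n) f)
    (exist _ (pb2 FC (subm n) f) (@pb_M FC _ _ _ (subm n) f (proj2_sig (projT2 n)))).

Definition ClOp := forall x : C, sub (@fM _ FS) x -> sub (@fM _ FS) x.

Definition is_closure_op (c : ClOp) : Prop :=
  (forall x (m : sub (@fM _ FS) x), sub_le m (c x m)) /\
  (forall x (m n : sub (@fM _ FS) x), sub_le m n -> sub_le (c x m) (c x n)) /\
  (forall x y (f : Hom x y) (m : sub (@fM _ FS) x),
      sub_le (image f (c x m)) (c y (image f m))).

Definition preserving (d : ClOp) {a b : C} (f : Hom a b) : Prop :=
  forall m : sub (@fM _ FS) a, sub_eqv (image f (d a m)) (d b (image f m)).

Definition compact (FC : FinComplete C) (d : ClOp) (x : C) : Prop :=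
  forall y : C, preserving d (pi2 FC x y).

End Subobjects.

Arguments img_of {_} _ {_ _} _.
Arguments image {_} _ {_ _} _ _.
Arguments preimage {_} _ _ {_ _} _ _.
Arguments is_closure_op {_} _ _.
Arguments compact {_} _ _ _ _.

(* c^rho_X(m) = rho_X^{-1}(c_{RX}(Rm)), where c_{RX}(Rm) := c_{RX}((Rm)(1)).
   The N-subobject c_{RX}(Rm) of RX is regarded as an M-subobject of the
   X-object RX via the inclusion, using N ⊆ M (hypothesis [hNM]). *)
Definition crho {CX CA : Category} (FCX : FinComplete CX)
    (FSX : FactSys CX) (FSA : FactSys CA) (Rf : Reflection CX CA)
    (hNM : forall (a b : CA) (g : Hom a b), fM FSA g -> fM FSX (fmap (incl Rf) g))
    (c : ClOp FSA) : ClOp FSX :=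
  fun x m =>
    let n := c (refl Rf x) (img_of FSA (fmap (refl Rf) (subm m))) in
    preimage FSX FCX (unit Rf x)
      (existT _ (incl Rf (projT1 n))
         (exist _ (fmap (incl Rf) (subm n)) (hNM _ _ _ (proj2_sig (projT2 n))))).
Arguments crho {CX CA} FCX FSX FSA Rf hNM c _ _.

(* Main.v *)
Require Import Defs.

Section Gen.
Variable C : Category.
Variable FS : FactSys C.
Notation S x := (sub (@fM C FS) x).

Lemma subm_M {x} (t : S x) : fM FS (subm t).
Proof. exact (proj2_sig (projT2 t)). Qed.

Lemma le_refl {x} (s : S x) : sub_le s s.
Proof. exists (idm _). now rewrite comp_id_r. Qed.

Lemma le_trans {x} (s t u : S x) : sub_le s t -> sub_le t u -> sub_le s u.
Proof. intros [j Hj] [k Hk]. exists (k ∘ j). rewrite Hj, Hk, comp_assoc. reflexivity. Qed.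

Lemma eqv_refl {x} (s : S x) : sub_eqv s s.
Proof. split; apply le_refl. Qed.
Lemma eqv_sym {x} (s t : S x) : sub_eqv s t -> sub_eqv t s.
Proof. intros [a b]; split; assumption. Qed.
Lemma eqv_trans {x} (s t u : S x) : sub_eqv s t -> sub_eqv t u -> sub_eqv s u.
Proof. intros [a b] [c d]; split; eapply le_trans; eassumption. Qed.

Lemma img_spec {a b} (g : Hom a b) :
  exists e : Hom a (projT1 (img_of FS g)), fE FS e /\ g = subm (img_of FS g) ∘ e.
Proof.
  unfold img_of, subm; simpl.
  destruct (fact FS g) as [z [e [m [He [Hm Hg]]]]]; simpl.
  exists e; split; assumption.
Qed.

Lemma le_via_E {x} (s t : S x) {w} (e : Hom w (projT1 s)) (u : Hom w (projT1 t)) :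
  fE FS e -> subm s ∘ e = subm t ∘ u -> sub_le s t.
Proof.
  intros He H.
  destruct (diag He (subm_M t) (eq_sym H)) as [d [[_ Hd] _]].
  exists d. symmetry; exact Hd.
Qed.

Lemma le_via_E2 {x} (s t : S x) {w w'} (e1 : Hom w (projT1 s)) (e2 : Hom w' w)
   (u : Hom w' (projT1 t)) :
  fE FS e1 -> fE FS e2 -> (subm s ∘ e1) ∘ e2 = subm t ∘ u -> sub_le s t.
Proof.
  intros He1 He2 H.
  destruct (diag He2 (subm_M t) (eq_sym H)) as [d [[_ Hd] _]].
  apply (le_via_E s t e1 d He1). symmetry; exact Hd.
Qed.

Lemma img_le {a x} (g : Hom a x) (t : S x) u : g = subm t ∘ u -> sub_le (img_of FS g) t.
Proof.
  intros H. destruct (img_spec g) as [e [He Hg]].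
  apply (le_via_E _ t e u He). rewrite <- Hg. exact H.
Qed.

Lemma img_ge {a x w} (g : Hom a x) (t : S x) (e : Hom w (projT1 t)) (v : Hom w a) :
  fE FS e -> subm t ∘ e = g ∘ v -> sub_le t (img_of FS g).
Proof.
  intros He H. destruct (img_spec g) as [e' [He' Hg]].
  apply (le_via_E t _ e (e' ∘ v) He). rewrite H, comp_assoc. f_equal. exact Hg.
Qed.

Lemma image_mono {a b} (f : Hom a b) (s t : S a) :
  sub_le s t -> sub_le (image FS f s) (image FS f t).
Proof.
  intros [j Hj]. unfold image. destruct (img_spec (f ∘ subm t)) as [e [He Hg]].
  apply img_le with (u := e ∘ j). rewrite Hj, !comp_assoc. f_equal. exact Hg.
Qed.

Lemma image_eqv {a b} (f : Hom a b) (s t : S a) :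
  sub_eqv s t -> sub_eqv (image FS f s) (image FS f t).
Proof. intros [h1 h2]; split; apply image_mono; assumption. Qed.

Lemma image_comp {a b c} (f : Hom a b) (g : Hom b c) (m : S a) :
  sub_eqv (image FS (g ∘ f) m) (image FS g (image FS f m)).
Proof.
  unfold image.
  destruct (img_spec (f ∘ subm m)) as [e1 [He1 H1]].
  destruct (img_spec (g ∘ subm (img_of FS (f ∘ subm m)))) as [e2 [He2 H2]].
  destruct (img_spec (g ∘ f ∘ subm m)) as [e3 [He3 H3]].
  split.
  - apply img_le with (u := e2 ∘ e1).
    rewrite <- comp_assoc.
    transitivity (g ∘ (subm (img_of FS (f ∘ subm m)) ∘ e1)). { f_equal. exact H1. }
    rewrite comp_assoc.
    transitivity ((subm (img_of FS (g ∘ subm (img_of FS (f ∘ subm m)))) ∘ e2) ∘ e1).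
    { f_equal. exact H2. }
    symmetry. apply comp_assoc.
  - apply (le_via_E2 _ _ e2 e1 e3 He2 He1).
    transitivity ((g ∘ subm (img_of FS (f ∘ subm m))) ∘ e1). { f_equal. symmetry. exact H2. }
    transitivity (g ∘ (subm (img_of FS (f ∘ subm m)) ∘ e1)). { symmetry. apply comp_assoc. }
    transitivity (g ∘ (f ∘ subm m)). { f_equal. symmetry. exact H1. }
    rewrite comp_assoc. exact H3.
Qed.

Lemma id_iso {a : C} : iso (idm a).
Proof. exists (idm a). split; apply comp_id_l. Qed.

Lemma image_id {a} (m : S a) : sub_eqv (image FS (idm a) m) m.
Proof.
  unfold image. split.
  - apply img_le with (u := idm _). rewrite comp_id_l, comp_id_r. reflexivity.
  - apply img_ge with (e := idm _) (v := idm _). apply (iso_E FS). apply id_iso.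
    rewrite comp_id_l, !comp_id_r. reflexivity.
Qed.

Lemma image_ext {a b} (f g : Hom a b) (m : S a) : f = g -> sub_eqv (image FS f m) (image FS g m).
Proof. intros ->. apply eqv_refl. Qed.

Variable c : ClOp FS.
Hypothesis hc : is_closure_op FS c.

Lemma c_mono {x} (s t : S x) : sub_le s t -> sub_le (c x s) (c x t).
Proof. destruct hc as [_ [H _]]. apply H. Qed.
Lemma c_eqv {x} (s t : S x) : sub_eqv s t -> sub_eqv (c x s) (c x t).
Proof. intros [h1 h2]; split; apply c_mono; assumption. Qed.
Lemma c_img {x y} (f : Hom x y) (m : S x) : sub_le (image FS f (c x m)) (c y (image FS f m)).
Proof. destruct hc as [_ [_ H]]. apply H. Qed.

Lemma c_iso {x y} (f : Hom x y) (m : S x) : iso f ->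
  sub_eqv (image FS f (c x m)) (c y (image FS f m)).
Proof.
  intros [g [Hgf Hfg]]. split; [apply c_img|].
  set (z := c y (image FS f m)).
  apply le_trans with (image FS f (image FS g z)).
  { apply le_trans with (image FS (f ∘ g) z).
    { rewrite Hfg. apply (proj2 (image_id z)). }
    apply (proj1 (image_comp g f z)). }
  apply image_mono.
  apply le_trans with (c x (image FS g (image FS f m))). apply c_img.
  apply c_mono.
  eapply le_trans; [apply (image_comp f g m)|].
  rewrite Hgf. apply (proj1 (image_id _)).
Qed.
End Gen.

Lemma fmap_iso {C D : Category} (F : Functor C D) {a b : C} (f : Hom a b) :
  iso f -> iso (fmap F f).
Proof.
  intros [g [H1 H2]]. exists (fmap F g). rewrite <- !fmap_comp, H1, H2, !fmap_id. split; reflexivity.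
Qed.

Lemma iso_mono {C : Category} {a b : C} (f : Hom a b) : iso f -> mono f.
Proof.
  intros [g [H1 H2]] z u v H. rewrite <- (comp_id_l u), <- (comp_id_l v), <- H1, <- !comp_assoc, H.
  reflexivity.
Qed.

Section Main.
Variables (CX CA : Category) (FCX : FinComplete CX) (FCA : FinComplete CA)
  (FSX : FactSys CX) (FSA : FactSys CA) (Rf : Reflection CX CA)
  (hpropX : proper FSX) (hpropA : proper FSA)
  (hNM : forall (a b : CA) (g : Hom a b), fM FSA g <-> fM FSX (fmap (incl Rf) g))
  (hRE : forall (x y : CX) (f : Hom x y), fE FSX f -> fE FSA (fmap (refl Rf) f))
  (hEpb : forall (a b c : CX) (e : Hom a c) (f : Hom b c),
      fE FSX e -> fE FSX (pb2 FCX e f))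
  (hErefl : forall x : CX, fE FSX (unit Rf x)).

Notation I := (incl Rf).
Notation R := (refl Rf).
Notation ρ := (unit Rf).
Notation SX x := (sub (@fM CX FSX) x).
Notation SA x := (sub (@fM CA FSA) x).

Definition hN := (fun a b g h => proj1 (hNM a b g) h).

Definition inS {a : CA} (n : SA a) : SX (I a) :=
  existT _ (I (projT1 n)) (exist _ (fmap I (subm n)) (hN _ _ _ (proj2_sig (projT2 n)))).

Lemma pb1_E {a b c : CX} (f : Hom a c) (e : Hom b c) : fE FSX e -> fE FSX (pb1 FCX f e).
Proof.
  intros He.
  destruct (pb_univ FCX (f:=e) (g:=f) (q1 := pb2 FCX f e) (q2 := pb1 FCX f e))
    as [u [Hu1 Hu2]]. { symmetry. apply pb_comm. }
  destruct (pb_univ FCX (f:=f) (g:=e) (q1 := pb2 FCX e f) (q2 := pb1 FCX e f))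
    as [v [Hv1 Hv2]]. { symmetry. apply pb_comm. }
  assert (Hvu : v ∘ u = idm _).
  { apply (pb_uniq (f0:=FCX) (f:=f) (g:=e)).
    - rewrite comp_assoc, Hv1, Hu2, comp_id_r. reflexivity.
    - rewrite comp_assoc, Hv2, Hu1, comp_id_r. reflexivity. }
  assert (Huv : u ∘ v = idm _).
  { apply (pb_uniq (f0:=FCX) (f:=e) (g:=f)).
    - rewrite comp_assoc, Hu1, Hv2, comp_id_r. reflexivity.
    - rewrite comp_assoc, Hu2, Hv1, comp_id_r. reflexivity. }
  rewrite <- Hu2. eapply E_comp_iso. { exists v. split; assumption. }
  apply hEpb. exact He.
Qed.

Lemma preimage_mono {a b : CX} (f : Hom a b) (s t : SX b) :
  sub_le s t -> sub_le (preimage FSX FCX f s) (preimage FSX FCX f t).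
Proof.
  intros [j Hj].
  destruct (pb_univ FCX (f:=subm t) (g:=f) (q1 := j ∘ pb1 FCX (subm s) f)
     (q2 := pb2 FCX (subm s) f)) as [k [Hk1 Hk2]].
  { rewrite comp_assoc, <- Hj. apply pb_comm. }
  exists k. unfold preimage, subm at 1 3; simpl. symmetry. exact Hk2.
Qed.

Lemma preimage_eqv {a b : CX} (f : Hom a b) (s t : SX b) :
  sub_eqv s t -> sub_eqv (preimage FSX FCX f s) (preimage FSX FCX f t).
Proof. intros [h1 h2]; split; apply preimage_mono; assumption. Qed.

Lemma unit_fact {x : CX} {a : CA} (g : Hom x (I a)) : exists h, fmap I h ∘ ρ x = g.
Proof. destruct (unit_univ g) as [h [Hh _]]. exists h. exact Hh. Qed.

Lemma unit_ext {x : CX} {a : CA} (g h : Hom (R x) a) :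
  fmap I g ∘ ρ x = fmap I h ∘ ρ x -> g = h.
Proof.
  intros H. destruct (unit_univ (fmap I h ∘ ρ x)) as [k [_ Hk]].
  transitivity k; [symmetry|]; apply Hk; [exact H | reflexivity].
Qed.

Lemma counit (a : CA) : exists eps : Hom (R (I a)) a, iso eps /\ fmap I eps ∘ ρ (I a) = idm _.
Proof.
  destruct (unit_fact (idm (I a))) as [g Hg].
  destruct (incl_full (ρ (I a))) as [h Hh].
  exists g. split; [|exact Hg].
  exists h. split.
  - apply unit_ext. rewrite fmap_comp, <- comp_assoc, Hg, comp_id_r, Hh, fmap_id, comp_id_l.
    reflexivity.
  - apply (incl_faithful (r:=Rf)). rewrite fmap_comp, Hh, Hg, fmap_id. reflexivity.
Qed.

Lemma inclF_E {a b : CA} (f : Hom a b) : fE FSA f -> fE FSX (fmap I f).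
Proof.
  intros Hf.
  destruct (fact FSX (fmap I f)) as [z [e [m [He [Hm Hfm]]]]].
  destruct (unit_fact m) as [mt Hmt].
  destruct (diag (hErefl z) Hm (u := idm z) (v := fmap I mt)) as [d [[Hd1 Hd2] _]].
  { rewrite comp_id_r. symmetry. exact Hmt. }
  assert (Hrd : ρ z ∘ d = idm _).
  { apply (proj1 hpropX _ _ _ (hErefl z)). rewrite <- comp_assoc, Hd1, comp_id_l, comp_id_r.
    reflexivity. }
  assert (Hisoz : iso (ρ z)). { exists d. split; assumption. }
  destruct (incl_full (ρ z ∘ e)) as [et Het].
  assert (Hf2 : mt ∘ et = f).
  { apply (incl_faithful (r:=Rf)). rewrite fmap_comp, Het, comp_assoc, Hmt, Hfm. reflexivity. }
  assert (HmtM : fM FSA mt).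
  { apply hNM. rewrite <- Hd2. eapply M_comp_iso. exists (ρ z). split; assumption.
    exact Hm. }
  destruct (diag Hf HmtM (u := et) (v := idm b)) as [w [[Hw1 Hw2] _]].
  { rewrite comp_id_l. exact Hf2. }
  assert (Hwm : w ∘ mt = idm _).
  { apply (proj2 hpropA _ _ _ HmtM). rewrite comp_assoc, Hw2, comp_id_l, comp_id_r. reflexivity. }
  rewrite <- Hf2, fmap_comp, Het.
  eapply E_iso_comp. eapply E_iso_comp. exact He. exact Hisoz.
  apply fmap_iso. exists w. split; assumption.
Qed.

Lemma R_preimage {P : CX} (n : SA (R P)) :
  sub_eqv (img_of FSA (fmap R (subm (preimage FSX FCX (ρ P) (inS n))))) n.
Proof.
  change (subm (preimage FSX FCX (ρ P) (inS n))) with (pb2 FCX (fmap I (subm n)) (ρ P)).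
  set (t := pb2 FCX (fmap I (subm n)) (ρ P)).
  set (k := pb1 FCX (fmap I (subm n)) (ρ P)).
  assert (Hk : fmap I (subm n) ∘ k = ρ P ∘ t) by apply pb_comm.
  assert (HkE : fE FSX k) by (apply pb1_E; apply hErefl).
  destruct (unit_fact k) as [kt Hkt].
  assert (Ht : fmap R t = subm n ∘ kt).
  { apply unit_ext. rewrite unit_nat, <- Hk, <- Hkt, fmap_comp, comp_assoc. reflexivity. }
  destruct (counit (projT1 n)) as [eps [Heps1 Heps2]].
  assert (Hkt2 : kt = eps ∘ fmap R k).
  { apply unit_ext. rewrite Hkt, !fmap_comp, <- comp_assoc, unit_nat, comp_assoc, Heps2, comp_id_l.
    reflexivity. }
  assert (HktF : fE FSA kt).
  { rewrite Hkt2. eapply E_iso_comp. apply hRE. exact HkE. exact Heps1. }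
  split.
  - apply img_le with (u := kt). exact Ht.
  - apply img_ge with (e := kt) (v := idm _). exact HktF. rewrite comp_id_r. symmetry. exact Ht.
Qed.

Lemma image_preimage {x y : CX} (f : Hom x y) (t : SX y) : fE FSX f ->
  sub_eqv (image FSX f (preimage FSX FCX f t)) t.
Proof.
  intros Hf. unfold image.
  change (subm (preimage FSX FCX f t)) with (pb2 FCX (subm t) f).
  assert (Hc := pb_comm FCX (subm t) f).
  split.
  - apply img_le with (u := pb1 FCX (subm t) f). symmetry. exact Hc.
  - apply img_ge with (e := pb1 FCX (subm t) f) (v := idm _).
    apply pb1_E. exact Hf. rewrite comp_id_r. exact Hc.
Qed.

Lemma inS_reflect {a : CA} (s t : SA a) : sub_le (inS s) (inS t) -> sub_le s t.
Proof.
  intros [j Hj]. destruct (incl_full j) as [j' Hj']. exists j'.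
  apply (incl_faithful (r:=Rf)). rewrite fmap_comp, Hj'. exact Hj.
Qed.

Lemma inS_mono {a : CA} (s t : SA a) : sub_le s t -> sub_le (inS s) (inS t).
Proof.
  intros [j Hj]. exists (fmap I j). change (fmap I (subm s) = fmap I (subm t) ∘ fmap I j).
  rewrite <- fmap_comp, <- Hj. reflexivity.
Qed.

Lemma inS_eqv {a : CA} (s t : SA a) : sub_eqv s t -> sub_eqv (inS s) (inS t).
Proof. intros [h1 h2]; split; apply inS_mono; assumption. Qed.

Lemma R_img {x y : CX} (f : Hom x y) (m : SX x) :
  sub_eqv (img_of FSA (fmap R (subm (image FSX f m))))
          (image FSA (fmap R f) (img_of FSA (fmap R (subm m)))).
Proof.
  unfold image.
  destruct (img_spec CX FSX (f ∘ subm m)) as [e [He Hem]].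
  set (img := img_of FSX (f ∘ subm m)) in *.
  destruct (img_spec CA FSA (fmap R (subm m))) as [ek [Hek Hk]].
  set (k := img_of FSA (fmap R (subm m))) in *.
  destruct (img_spec CA FSA (fmap R (subm img))) as [eL [HeL HL]].
  set (L := img_of FSA (fmap R (subm img))) in *.
  destruct (img_spec CA FSA (fmap R f ∘ subm k)) as [eR [HeR HR]].
  set (Ri := img_of FSA (fmap R f ∘ subm k)) in *.
  assert (Key : fmap R (subm img) ∘ fmap R e = fmap R f ∘ fmap R (subm m)).
  { rewrite <- !fmap_comp, Hem. reflexivity. }
  split.
  - apply (le_via_E2 CA FSA L Ri eL (fmap R e) (eR ∘ ek) HeL (hRE _ _ _ He)).
    rewrite <- HL, Key, Hk, comp_assoc, HR, comp_assoc. reflexivity.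
  - apply (le_via_E2 CA FSA Ri L eR ek (eL ∘ fmap R e) HeR Hek).
    rewrite <- HR, <- comp_assoc, <- Hk, <- Key, HL, comp_assoc. reflexivity.
Qed.

Section BCsec.
Variables (X0 Y : CX).
Notation P := (prod FCX X0 Y).
Notation p1 := (pi1 FCX X0 Y).
Notation p := (pi2 FCX X0 Y).
Hypothesis hphi : iso (pair FCA (fmap R p1) (fmap R p)).

Lemma jm {W : CX} (g h : Hom W (I (R P))) :
  fmap I (fmap R p1) ∘ g = fmap I (fmap R p1) ∘ h ->
  fmap I (fmap R p) ∘ g = fmap I (fmap R p) ∘ h -> g = h.
Proof.
  intros H1 H2.
  destruct (unit_fact g) as [gt Hg]. destruct (unit_fact h) as [ht Hh].
  subst g h.
  assert (E1 : fmap R p1 ∘ gt = fmap R p1 ∘ ht).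
  { apply unit_ext. rewrite !fmap_comp, <- !comp_assoc. exact H1. }
  assert (E2 : fmap R p ∘ gt = fmap R p ∘ ht).
  { apply unit_ext. rewrite !fmap_comp, <- !comp_assoc. exact H2. }
  assert (E : gt = ht).
  { apply (iso_mono _ hphi). apply pair_uniq.
    - rewrite !comp_assoc, !pi1_pair. exact E1.
    - rewrite !comp_assoc, !pi2_pair. exact E2. }
  rewrite E. reflexivity.
Qed.

Lemma BC (n : SA (R P)) :
  sub_eqv (image FSX p (preimage FSX FCX (ρ P) (inS n)))
          (preimage FSX FCX (ρ Y) (inS (image FSA (fmap R p) n))).
Proof.
  unfold image at 1.
  change (subm (preimage FSX FCX (ρ P) (inS n))) with (pb2 FCX (fmap I (subm n)) (ρ P)).
  set (t := pb2 FCX (fmap I (subm n)) (ρ P)).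
  set (k := pb1 FCX (fmap I (subm n)) (ρ P)).
  assert (Hk : fmap I (subm n) ∘ k = ρ P ∘ t) by apply pb_comm.
  destruct (img_spec CA FSA (fmap R p ∘ subm n)) as [f [Hf Hq]].
  change (img_of FSA (fmap R p ∘ subm n)) with (image FSA (fmap R p) n) in *.
  set (q := image FSA (fmap R p) n) in *.
  set (s := pb2 FCX (fmap I (subm q)) (ρ Y)).
  set (h := pb1 FCX (fmap I (subm q)) (ρ Y)).
  assert (Hs : fmap I (subm q) ∘ h = ρ Y ∘ s) by apply pb_comm.
  destruct (img_spec CX FSX (p ∘ t)) as [et [Het Ht]].
  set (im := img_of FSX (p ∘ t)) in *.
  split.
  - destruct (pb_univ FCX (f := fmap I (subm q)) (g := ρ Y) (q1 := fmap I f ∘ k) (q2 := p ∘ t))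
      as [u [Hu1 Hu2]].
    { rewrite comp_assoc, <- fmap_comp, <- Hq, fmap_comp, <- comp_assoc, Hk, comp_assoc,
        unit_nat, comp_assoc. reflexivity. }
    apply img_le with (u := u). symmetry. exact Hu2.
  - set (σ := pb2 FCX (fmap I f) h).
    set (w := pb1 FCX (fmap I f) h).
    assert (Hσ : fmap I f ∘ w = h ∘ σ) by apply pb_comm.
    assert (HσE : fE FSX σ) by (apply hEpb; apply inclF_E; exact Hf).
    pose (r := fmap I (fmap R p1) ∘ (fmap I (subm n) ∘ w)).
    set (τ := pb2 FCX (ρ X0) r).
    set (x := pb1 FCX (ρ X0) r).
    assert (Hτ : ρ X0 ∘ x = r ∘ τ) by apply pb_comm.
    assert (HτE : fE FSX τ) by (apply hEpb; apply hErefl).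
    set (z := pair FCX x (s ∘ σ ∘ τ)).
    assert (Hz : ρ P ∘ z = fmap I (subm n) ∘ (w ∘ τ)).
    { apply jm.
      - rewrite comp_assoc, unit_nat, <- comp_assoc. unfold z. rewrite pi1_pair, Hτ.
        unfold r. rewrite <- comp_assoc. f_equal. symmetry. apply comp_assoc.
      - transitivity (ρ Y ∘ (s ∘ σ ∘ τ)).
        { rewrite comp_assoc, unit_nat, <- comp_assoc. unfold z. rewrite pi2_pair. reflexivity. }
        transitivity (fmap I (subm q) ∘ (h ∘ σ) ∘ τ).
        { rewrite !comp_assoc, Hs. reflexivity. }
        rewrite <- Hσ.
        transitivity (fmap I (subm q ∘ f) ∘ w ∘ τ).
        { rewrite (fmap_comp I (subm q) f), !comp_assoc. reflexivity. }
        rewrite <- Hq, (fmap_comp I (fmap R p) (subm n)), !comp_assoc. reflexivity. }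
    destruct (pb_univ FCX (f := fmap I (subm n)) (g := ρ P) (q1 := w ∘ τ) (q2 := z))
      as [g [Hg1 Hg2]].
    { symmetry. exact Hz. }
    apply (le_via_E2 CX FSX (preimage FSX FCX (ρ Y) (inS q)) im σ τ (et ∘ g) HσE HτE).
    change (subm (preimage FSX FCX (ρ Y) (inS q))) with s.
    rewrite comp_assoc, <- Ht, <- comp_assoc.
    transitivity (p ∘ z). { unfold z. rewrite pi2_pair. rewrite !comp_assoc. reflexivity. }
    rewrite <- Hg2. apply comp_assoc.
Qed.
End BCsec.

Lemma iso_comp {C : Category} {a b d : C} (f : Hom a b) (g : Hom b d) :
  iso f -> iso g -> iso (g ∘ f).
Proof.
  intros [f' [F1 F2]] [g' [G1 G2]]. exists (f' ∘ g'). split.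
  - rewrite comp_assoc, <- (comp_assoc f' g' g), G1, comp_id_r, F1. reflexivity.
  - rewrite comp_assoc, <- (comp_assoc g f f'), F2, comp_id_r, G2. reflexivity.
Qed.

Section Thm.
Variable c : ClOp FSA.
Hypothesis hc : is_closure_op FSA c.
Variable X : CX.
Hypothesis hpres : forall Y : CX,
      iso (pair FCA (fmap R (pi1 FCX X Y)) (fmap R (pi2 FCX X Y))).

Notation cr := (crho FCX FSX FSA Rf hN c).

Lemma cr_eq x m : cr x m = preimage FSX FCX (ρ x) (inS (c (R x) (img_of FSA (fmap R (subm m))))).
Proof. reflexivity. Qed.

Lemma A_side (HX : compact FSX FCX cr X) (Y : CX) (n : SA (R (prod FCX X Y))) :
  sub_eqv (image FSA (fmap R (pi2 FCX X Y)) (c _ n)) (c _ (image FSA (fmap R (pi2 FCX X Y)) n)).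
Proof.
  set (P := prod FCX X Y) in *. set (p := pi2 FCX X Y) in *.
  set (m := preimage FSX FCX (ρ P) (inS n)).
  assert (H := HX Y m). fold P p in H. rewrite !cr_eq in H.
  assert (H2 : sub_eqv (preimage FSX FCX (ρ Y) (inS (image FSA (fmap R p) (c _ n))))
                       (preimage FSX FCX (ρ Y) (inS (c _ (image FSA (fmap R p) n))))).
  { eapply eqv_trans; [apply eqv_sym, BC, hpres|].
    eapply eqv_trans; [|eapply eqv_trans; [apply H|]].
    - apply image_eqv, preimage_eqv, inS_eqv, (c_eqv _ _ _ hc), eqv_sym, R_preimage.
    - apply preimage_eqv, inS_eqv, (c_eqv _ _ _ hc).
      eapply eqv_trans; [apply R_img|]. apply image_eqv, R_preimage. }
  assert (H3 := image_eqv _ _ (ρ Y) _ _ H2).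
  assert (H4 : sub_eqv (inS (image FSA (fmap R p) (c _ n))) (inS (c _ (image FSA (fmap R p) n)))).
  { eapply eqv_trans; [apply eqv_sym, (image_preimage (ρ Y) _ (hErefl Y))|].
    eapply eqv_trans; [apply H3|]. apply (image_preimage (ρ Y) _ (hErefl Y)). }
  destruct H4 as [H5 H6]. split; apply inS_reflect; assumption.
Qed.

Lemma dirB (HX : compact FSX FCX cr X) : compact FSA FCA c (R X).
Proof.
  intros B k0.
  set (p := pi2 FCX X (I B)).
  set (φ := pair FCA (fmap R (pi1 FCX X (I B))) (fmap R p)).
  assert (Hφ : iso φ) by apply hpres.
  destruct (counit B) as [eps [Heps _]].
  destruct Heps as [eps' [E1 E2]].
  set (θ := pair FCA (pi1 FCA (R X) (R (I B))) (eps ∘ pi2 FCA (R X) (R (I B)))).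
  assert (Hθ : iso θ).
  { exists (pair FCA (pi1 FCA (R X) B) (eps' ∘ pi2 FCA (R X) B)). split.
    - unfold θ. apply pair_uniq.
      + rewrite comp_assoc, !pi1_pair, comp_id_r. reflexivity.
      + rewrite comp_assoc, pi2_pair, <- comp_assoc, pi2_pair, comp_assoc, E1, comp_id_l, comp_id_r.
        reflexivity.
    - unfold θ. apply pair_uniq.
      + rewrite comp_assoc, !pi1_pair, comp_id_r. reflexivity.
      + rewrite comp_assoc, pi2_pair, <- comp_assoc, pi2_pair, comp_assoc, E2, comp_id_l, comp_id_r.
        reflexivity. }
  set (ψ := θ ∘ φ).
  assert (Hψ : iso ψ) by (apply iso_comp; assumption).
  set (q := pi2 FCA (R X) B).
  assert (Hqψ : q ∘ ψ = eps ∘ fmap R p).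
  { unfold ψ, q. rewrite comp_assoc. unfold θ. rewrite pi2_pair, <- comp_assoc.
    unfold φ. rewrite pi2_pair. reflexivity. }
  destruct Hψ as [ψ' [P1 P2]].
  assert (Hψ : iso ψ) by (apply iso_comp; assumption).
  assert (Heps : iso eps) by (exists eps'; split; assumption).
  set (n := image FSA ψ' k0).
  assert (Hk0 : sub_eqv (image FSA ψ n) k0).
  { eapply eqv_trans; [apply eqv_sym, image_comp|]. rewrite P2. apply image_id. }
  change (sub_eqv (image FSA q (c _ k0)) (c _ (image FSA q k0))).
  eapply eqv_trans.
  { apply image_eqv, (c_eqv _ _ _ hc), eqv_sym, Hk0. }
  eapply eqv_trans.
  { apply image_eqv, eqv_sym, (c_iso _ _ _ hc), Hψ. }
  eapply eqv_trans; [apply eqv_sym, image_comp|].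
  rewrite Hqψ.
  eapply eqv_trans; [apply image_comp|].
  eapply eqv_trans; [apply image_eqv, A_side, HX|].
  eapply eqv_trans; [apply (c_iso _ _ _ hc), Heps|].
  apply (c_eqv _ _ _ hc).
  eapply eqv_trans; [apply eqv_sym, image_comp|].
  fold p. rewrite <- Hqψ.
  eapply eqv_trans; [apply image_comp|].
  apply image_eqv, Hk0.
Qed.

Lemma dirA (HA : compact FSA FCA c (R X)) : compact FSX FCX cr X.
Proof.
  intros Y m. rewrite !cr_eq.
  set (P := prod FCX X Y) in *. set (p := pi2 FCX X Y) in *.
  set (φ := pair FCA (fmap R (pi1 FCX X Y)) (fmap R p)).
  assert (Hφ : iso φ) by apply hpres.
  assert (Hp : fmap R p = pi2 FCA (R X) (R Y) ∘ φ) by (unfold φ; rewrite pi2_pair; reflexivity).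
  set (k := img_of FSA (fmap R (subm m))).
  eapply eqv_trans; [apply BC, hpres|].
  apply preimage_eqv, inS_eqv.
  fold p. rewrite Hp.
  eapply eqv_trans; [apply image_comp|].
  eapply eqv_trans; [apply image_eqv, (c_iso _ _ _ hc), Hφ|].
  eapply eqv_trans; [apply HA|].
  apply (c_eqv _ _ _ hc).
  eapply eqv_trans; [apply eqv_sym, image_comp|].
  rewrite <- Hp. apply eqv_sym, R_img.
Qed.
End Thm.
End Main.
Theorem corollary2p10
  (CX CA : Category) (FCX : FinComplete CX) (FCA : FinComplete CA)
  (FSX : FactSys CX) (FSA : FactSys CA) (Rf : Reflection CX CA)
  (hpropX : proper FSX) (hpropA : proper FSA)
  (* N = M ∩ mor A (in particular N ⊆ M) *)
  (hNM : forall (a b : CA) (g : Hom a b), fM FSA g <-> fM FSX (fmap (incl Rf) g))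
  (* R E ⊆ F *)
  (hRE : forall (x y : CX) (f : Hom x y), fE FSX f -> fE FSA (fmap (refl Rf) f))
  (* E is stable under pullback *)
  (hEpb : forall (a b c : CX) (e : Hom a c) (f : Hom b c),
      fE FSX e -> fE FSX (pb2 FCX e f))
  (* A is E-reflective *)
  (hErefl : forall x : CX, fE FSX (unit Rf x))
  (c : ClOp FSA) (hc : is_closure_op FSA c)
  (X : CX)
  (* R preserves products with X: the comparison R(X×Y) -> RX × RY is an iso *)
  (hpres : forall Y : CX,
      iso (pair FCA (fmap (refl Rf) (pi1 FCX X Y)) (fmap (refl Rf) (pi2 FCX X Y)))) :
  compact FSX FCX (crho FCX FSX FSA Rf (fun a b g h => proj1 (hNM a b g) h) c) X
  <-> compact FSA FCA c (refl Rf X).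
Proof.
  split; intro H.
  - eapply dirB; eassumption.
  - eapply dirA; eassumption.
Qed.
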